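(* Fix parameters $\tau\in(0,1/100)$ and $M\ge2$, and let $\theta=2+\tau$. Let $G$ be a non-trivial and structured GCD graph with set of primes $\mathcal{P}$ such that \[ \mathcal{R}(G)\subseteq\{p> C_6\} \quad\text{and}\quad \mathcal{R}_-(G)\neq\emptyset. \] Then there is a numerator-exact GCD subgraph $G'$ of $G$ with multiplicative data $(\mathcal{P}',f',g')$ such that: (a) $G'$ is non-trivial and maximal; (b) $\mathcal{P}\subsetneq\mathcal{P}'\subseteq \mathcal{P}\cup \mathcal{R}_-(G)$, $\mathcal{R}_-(G')\subsetneq \mathcal{R}_-(G)$, and $\mathcal{R}_+(G')\subseteq \mathcal{R}_+(G)$; (c) $f'(p)\le 0$ and $g'(p)\le 0$ for all $p\in\mathcal{P}'\setminus\mathcal{P}$; (d) $q(G')\geqslant q(G)\prod_{p\in\mathcal{P}'\setminus\mathcal{P}} (1-\mathbbm{1}_{f'(p)=g'(p)<0}/p)^2 (1-1/p^{1+\frac{\tau}{4}})$.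
   Context: For a prime $p$, $k\in\mathbb{Z}$ and $\rho\in\mathbb{Q}_{>0}$, write $\operatorname{e}_p(\rho)=k$ if $\rho=p^ka/q$ with $a,q\in\mathbb{N}$, $p\nmid aq$. For real $t$, $t^+=\max\{t,0\}$, $t^-=\max\{-t,0\}$. Weighted bipartite graph: $(\mu,\mathcal{V},\mathcal{W},\mathcal{E})$ with $\mu:\mathbb{R}_{>0}\to\mathbb{R}_{>0}$, $\mathcal{V},\mathcal{W}$ finite sets of positive reals, $\mathcal{E}\subseteq\mathcal{V}\times\mathcal{W}$; $\mu(\mathcal{T})=\sum_{t\in\mathcal{T}}\mu(t)$, $\mu(\mathcal{E})=\sum_{(v,w)\in\mathcal{E}}\mu(v)\mu(w)$; edge density $\delta=\mu(\mathcal{E})/(\mu(\mathcal{V})\mu(\mathcal{W}))$ if $\mathcal{E}\neq\emptyset$, else $0$; $\mu^{(\theta)}=\delta^\theta\mu(\mathcal{V})\mu(\mathcal{W})$. A subgraph has $\mathcal{V}'\subseteq\mathcal{V}$, $\mathcal{W}'\subseteq\mathcal{W}$, $\mathcal{E}'\subseteq\mathcal{E}\cap(\mathcal{V}'\times\mathcal{W}')$, same $\mu$. ''Maximal'' means $\mu^{(\theta)}(G)\ge\mu^{(\theta)}(G')$ for every subgraph $G'$ (with $\theta=2+\tau$). GCD graph: a septuple $G=(\mu,\mathcal{V},\mathcal{W},\mathcal{E},\mathcal{P},f,g)$ where $(\mu,\mathcal{V},\mathcal{W},\mathcal{E})$ is a weighted bipartite graph with $\mathcal{V},\mathcal{W}\subset\mathbb{Q}_{>0}$,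 $\mathcal{P}$ is a set of primes (its ''set of primes''; $(\mathcal{P},f,g)$ is its ''multiplicative data''), $f,g:\mathcal{P}\to\mathbb{Z}$, and for all $p\in\mathcal{P}$ and all $(a/q,b/r)\in\mathcal{V}\times\mathcal{W}$ with $\gcd(a,q)=\gcd(b,r)=1$: $p^{f^+(p)}\mid a$, $p^{g^+(p)}\mid b$, $p^{f^-(p)}\mid q$, $p^{g^-(p)}\mid r$, and if $(a/q,b/r)\in\mathcal{E}$ then the exact power of $p$ dividing $\gcd(a,b)$ is $p^{\min\{f^+(p),g^+(p)\}}$ and that dividing $\gcd(q,r)$ is $p^{\min\{f^-(p),g^-(p)\}}$. $G$ is non-trivial if $\mathcal{E}\neq\emptyset$. Quality: $q(G)=\mu^{(\theta)}(G)\prod_{p\in\mathcal{P}}p^{|f(p)-g(p)|}$. A GCD subgraph $G'=(\mu,\mathcal{V}',\mathcal{W}',\mathcal{E}',\mathcal{P}',f',g')$ of $G$ has $\mathcal{V}'\subseteq\mathcal{V}$, $\mathcal{W}'\subseteq\mathcal{W}$, $\mathcal{E}'\subseteq\mathcal{E}$, $\mathcal{P}'\supseteq\mathcal{P}$, $f'|_{\mathcal{P}}=f$, $g'|_{\mathcal{P}}=g$. It is numerator-exact if for every $p\in\mathcal{P}'\setminus\mathcal{P}$ and every $(a/q,b/r)\in\mathcal{V}'\times\mathcal{W}'$ with $\gcd(a,q)=\gcd(b,r)=1$, $p^{f'^+(p)}$ exactly divides $a$ and $p^{g'^+(p)}$ exactly divides $b$. $\mathcal{R}(G)$ is the set of primes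 $p\notin\mathcal{P}$ for which there is $(a/q,b/r)\in\mathcal{E}$ with $\gcd(a,q)=\gcd(b,r)=1$ and $p\mid\gcd(a,b)\gcd(q,r)$. $G$ is structured if for each $p\in\mathcal{R}(G)$ there is $k_p\in\mathbb{Z}$ with $(\operatorname{e}_p(v)-k_p,\operatorname{e}_p(w)-k_p)\in\{(-1,0),(0,-1),(0,0),(0,1),(1,0)\}$ for all $(v,w)\in\mathcal{E}$. For structured $G$, $\mathcal{R}_+(G)$ is the set of $p\in\mathcal{R}(G)$ with $\operatorname{e}_p(v)\ge0$ and $\operatorname{e}_p(w)\ge0$ for all $(v,w)\in\mathcal{E}$, and $\mathcal{R}_-(G)$ is the set of $p\in\mathcal{R}(G)$ with $\operatorname{e}_p(v)\le0$ and $\operatorname{e}_p(w)\le0$ for all $(v,w)\in\mathcal{E}$. Constants: $C_1=10^4/\tau$, $C_2=10MC_1^3$, $C_4=10^{10}M^2C_2^2$, $C_6=\max\{C_4,10^4MC_2,C_2^{10/\tau}\}$. *)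

(* Defs.v *)
From HB Require Import structures.
From mathcomp Require Import all_boot all_order all_algebra finmap.
From mathcomp Require Import reals exp.
Set Implicit Arguments. Unset Strict Implicit. Unset Printing Implicit Defensive.
Import Order.TTheory GRing.Theory Num.Theory.
Local Open Scope ring_scope.
Local Open Scope fset_scope.

Definition rnum (v : rat) : nat := `|numq v|%N.
Definition rden (v : rat) : nat := `|denq v|%N.

Definition ipos (z : int) : nat := match z with Posz n => n | Negz _ => 0%N end.
Definition ineg (z : int) : nat := match z with Posz _ => 0%N | Negz n => n.+1 end.

Definition ep (p : nat) (v : rat) : int := (logn p (rnum v))%:Z - (logn p (rden v))%:Z.

(* A GCD graph (mu, V, W, E, P, f, g); the axioms are in [is_gcd_graph]. *)
Record GCDGraph (R : realType) := mkGCDGraph {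
  gmu : R -> R;
  gV : {fset rat};
  gW : {fset rat};
  gE : {fset rat * rat};
  gP : {fset nat};
  gf : nat -> int;
  gg : nat -> int }.

Section Defs.
Variable R : realType.

Definition is_wbg (mu : R -> R) (V W : {fset rat}) (E : {fset rat * rat}) : Prop :=
  (forall x : R, 0 < x -> 0 < mu x) /\
  (forall v, v \in V -> 0 < v) /\ (forall w, w \in W -> 0 < w) /\
  (forall e, e \in E -> (e.1 \in V) && (e.2 \in W)).

Definition muS (mu : R -> R) (S : {fset rat}) : R := \sum_(v <- S) mu (ratr v).
Definition muE (mu : R -> R) (E : {fset rat * rat}) : R :=
  \sum_(e <- E) mu (ratr e.1) * mu (ratr e.2).
Definition density (mu : R -> R) (V W : {fset rat}) (E : {fset rat * rat}) : R :=
  if E == fset0 then 0 else muE mu E / (muS mu V * muS mu W).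
Definition mu_theta (theta : R) (mu : R -> R) (V W : {fset rat})
    (E : {fset rat * rat}) : R :=
  powR (density mu V W E) theta * muS mu V * muS mu W.

Definition is_gcd_graph (G : GCDGraph R) : Prop :=
  is_wbg (gmu G) (gV G) (gW G) (gE G) /\
  (forall p, p \in gP G -> prime p) /\
  (forall p, p \in gP G ->
     (forall v, v \in gV G ->
        (p ^ ipos (gf G p) %| rnum v)%N /\ (p ^ ineg (gf G p) %| rden v)%N) /\
     (forall w, w \in gW G ->
        (p ^ ipos (gg G p) %| rnum w)%N /\ (p ^ ineg (gg G p) %| rden w)%N) /\
     (forall e, e \in gE G ->
        logn p (gcdn (rnum e.1) (rnum e.2)) = minn (ipos (gf G p)) (ipos (gg G p)) /\
        logn p (gcdn (rden e.1) (rden e.2)) = minn (ineg (gf G p)) (ineg (gg G p)))).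

Definition nontrivial (G : GCDGraph R) : Prop := gE G != fset0.

Definition gmu_theta (theta : R) (G : GCDGraph R) : R :=
  mu_theta theta (gmu G) (gV G) (gW G) (gE G).

Definition quality (theta : R) (G : GCDGraph R) : R :=
  gmu_theta theta G * \prod_(p <- gP G) (p%:R ^+ `|gf G p - gg G p|%N).

Definition maximal (theta : R) (G : GCDGraph R) : Prop :=
  forall (V' W' : {fset rat}) (E' : {fset rat * rat}),
    V' `<=` gV G -> W' `<=` gW G ->
    (forall e, e \in E' -> [&& e \in gE G, e.1 \in V' & e.2 \in W']) ->
    mu_theta theta (gmu G) V' W' E' <= gmu_theta theta G.

Definition gcd_subgraph (G' G : GCDGraph R) : Prop :=
  gmu G' = gmu G /\ gV G' `<=` gV G /\ gW G' `<=` gW G /\ gE G' `<=` gE G /\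
  gP G `<=` gP G' /\
  (forall p, p \in gP G -> gf G' p = gf G p /\ gg G' p = gg G p).

Definition numerator_exact (G' G : GCDGraph R) : Prop :=
  forall p, p \in gP G' -> p \notin gP G ->
    (forall v, v \in gV G' -> logn p (rnum v) = ipos (gf G' p)) /\
    (forall w, w \in gW G' -> logn p (rnum w) = ipos (gg G' p)).

Definition inR (G : GCDGraph R) (p : nat) : Prop :=
  prime p /\ p \notin gP G /\
  exists e, e \in gE G /\
    (p %| gcdn (rnum e.1) (rnum e.2) * gcdn (rden e.1) (rden e.2))%N.

Definition structured (G : GCDGraph R) : Prop :=
  forall p, inR G p -> exists k : int, forall e, e \in gE G ->
    (ep p e.1 - k, ep p e.2 - k) \in
      [:: (-1, 0); (0, -1); (0, 0); (0, 1); (1, 0)]%R.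

Definition inRplus (G : GCDGraph R) (p : nat) : Prop :=
  inR G p /\ forall e, e \in gE G -> 0 <= ep p e.1 /\ 0 <= ep p e.2.

Definition inRminus (G : GCDGraph R) (p : nat) : Prop :=
  inR G p /\ forall e, e \in gE G -> ep p e.1 <= 0 /\ ep p e.2 <= 0.

Definition C1 (tau : R) : R := 10 ^+ 4 / tau.
Definition C2 (tau M : R) : R := 10 * M * C1 tau ^+ 3.
Definition C4 (tau M : R) : R := 10 ^+ 10 * M ^+ 2 * C2 tau M ^+ 2.
Definition C6 (tau M : R) : R :=
  Num.max (C4 tau M) (Num.max (10 ^+ 4 * M * C2 tau M) (powR (C2 tau M) (10 / tau))).

End Defs.

(* Main.v *)
Require Import Defs.
From HB Require Import structures.
From mathcomp Require Import all_boot all_order all_algebra finmap.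
From mathcomp Require Import reals exp.
From mathcomp Require Import ring lra zify.
Import Order.TTheory GRing.Theory Num.Theory.

Module MT2.
Local Open Scope ring_scope.

Section An.
Variable R : realType.
Implicit Types x y r : R.

Lemma wamgm r x y : 0 < r < 1 -> 0 <= x -> 0 <= y ->
  x `^ r * y `^ (1 - r) <= r * x + (1 - r) * y.
Proof.
move=> /andP[r0 r1] x0 y0.
have r'0 : 0 < 1 - r by rewrite subr_gt0.
have := @conjugate_powR R (x `^ r) (y `^ (1 - r)) r^-1 (1 - r)^-1
  (powR_ge0 _ _) (powR_ge0 _ _).
rewrite !invr_gt0 r0 r'0 !invrK -!powRrM !divff ?gt_eqF // !powRr1 //.
rewrite (mulrC r) (mulrC (1 - r)) => H.
by apply: H => //; rewrite addrC subrK.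
Qed.

Lemma wamgm1 r x : 0 < r < 1 -> 0 <= x -> x `^ r <= r * x + (1 - r).
Proof.
move=> hr x0; have := @wamgm r x 1 hr x0 ler01.
by rewrite powR1 mulr1 mulr1.
Qed.
Arguments wamgm1 {r x}.

Lemma powR_le1 x r : 0 <= x <= 1 -> 0 <= r -> x `^ r <= 1.
Proof.
move=> /andP[x0 x1] r0.
have := @ge0_ler_powR R r r0 x 1; rewrite powR1; apply => //; by rewrite nnegrE.
Qed.

Lemma Hsmall (s t u : R) : 3^-1 < s -> s < 2^-1 -> 0 <= t <= 2^-1 -> 0 <= u <= 1 ->
  (1 - t) `^ (2 * s) * (1 - u) `^ (2 * (1 - s)) + 2 * (t `^ s * u `^ (1 - s))
    <= 1 + 96 * t ^+ 2.
Proof.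
move=> s13 s12 /andP[t0 t1] /andP[u0 u1].
have X0 : 0 <= (1 - t) `^ (2 * s) by apply: powR_ge0.
have Y0 : 0 <= (1 - u) `^ (2 * (1 - s)) by apply: powR_ge0.
have Z0 : 0 <= t `^ s * u `^ (1 - s) by apply: mulr_ge0; apply: powR_ge0.
have [ule|ugt] := lerP u (8 * t).
- have A1 : (1 - t) `^ (2 * s) <= 1 - 2 * s * t.
    have h1 : 0 < 2 * s < 1 by apply/andP; split; lra.
    have h2 : 0 <= 1 - t by lra.
    apply: (le_trans (wamgm1 h1 h2)); lra.
  have A2 : (1 - u) `^ (2 * (1 - s)) = (1 - u) * (1 - u) `^ (1 - 2 * s).
    rewrite -{2}(@powRr1 _ (1 - u)); last lra.
    rewrite -powRD; first by congr (_ `^ _); lra.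
    apply/implyP => /eqP; lra.
  have A3 : (1 - u) `^ (1 - 2 * s) <= (1 - 2 * s) * (1 - u) + (1 - (1 - 2 * s)).
    apply: wamgm1; first (apply/andP; split; lra). lra.
  have A4 : t `^ s * u `^ (1 - s) <= s * t + (1 - s) * u.
    by apply: wamgm => //; apply/andP; split; lra.
  have B0 : 0 <= (1 - u) `^ (1 - 2 * s) by apply: powR_ge0.
  have Y1 : (1 - u) `^ (2 * (1 - s)) <= (1 - u) * (1 - (1 - 2 * s) * u).
    rewrite A2; apply: ler_wpM2l; lra.
  have XY : (1 - t) `^ (2 * s) * (1 - u) `^ (2 * (1 - s)) <=
      (1 - 2 * s * t) * ((1 - u) * (1 - (1 - 2 * s) * u)).
    apply: ler_pM => //.
  apply: (le_trans (lerD XY (ler_wpM2l _ A4))); first lra.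
  
  have e1 : 0 <= (1 - 2 * s) * u ^+ 2 <= u ^+ 2.
    apply/andP; split; first by apply: mulr_ge0; [lra|apply: sqr_ge0].
    have := sqr_ge0 u; nra.
  have e2 : 0 <= s * t * u <= t * u.
    apply/andP; split; first by apply: mulr_ge0; [apply: mulr_ge0|]; lra.
    have : 0 <= t * u by apply: mulr_ge0.
    nra.
  have e3 : u ^+ 2 <= 64 * t ^+ 2 by nra.
  have e4 : t * u <= 8 * t ^+ 2 by nra.
  have e5 : 0 <= s * t * ((1 - 2 * s) * u ^+ 2) by
    apply: mulr_ge0; [apply: mulr_ge0|]; lra.
  nra.
- have ut : 0 < u by lra.
  have X1 : (1 - t) `^ (2 * s) <= 1 by apply: powR_le1; [apply/andP; split|]; lra.
  have Y1 : (1 - u) `^ (2 * (1 - s)) <= 1 - u.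
    have [->|u1'] := eqVneq u 1; first by rewrite subrr powR0 // gt_eqF //; lra.
    apply: ge1r_powR; last by lra.
    apply/andP; split; last lra.
    by rewrite subr_gt0 lt_neqAle u1' u1.
  have E8 : 2 <= 8 `^ s.
    have -> : (8 : R) = 2 `^ 3.
      by rewrite powR_mulrn ?(natrX R 2 3) //; lra.
    rewrite -(powRrM 2 3 s).
    apply: le_trans (ler_powR _ (_ : 1 <= 3 * s)); first by rewrite powRr1 //.
    lra. lra.
  have T1 : t `^ s <= (u / 8) `^ s.
    apply: ge0_ler_powR; rewrite ?nnegrE; lra.
  have T2 : (u / 8) `^ s * 8 `^ s = u `^ s.
    have n8 : (8:R) != 0 by rewrite pnatr_eq0.
    rewrite -powRM ?mulfVK //; lra.
  have T3 : u `^ s * u `^ (1 - s) = u.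
    rewrite -powRD; last by apply/implyP => _; rewrite gt_eqF.
    by rewrite addrC subrK powRr1 //; lra.
  have E8' : 0 < 8 `^ s by apply: powR_gt0; lra.
  have T4 : t `^ s * u `^ (1 - s) <= u / 2.
    have ua0 : 0 <= u `^ (1 - s) by apply: powR_ge0.
    apply: (le_trans (ler_wpM2r ua0 T1)).
    have : (u / 8) `^ s = u `^ s / 8 `^ s by rewrite -T2 mulfK // gt_eqF.
    move=> ->.
    rewrite mulrAC T3 ler_pdivrMr //; nra.
  have : (1 - t) `^ (2 * s) * (1 - u) `^ (2 * (1 - s)) <= 1 - u.
    apply: (le_trans (ler_pM X0 Y0 X1 Y1)); lra.
  have := sqr_ge0 t.
  lra.
Qed.


Lemma Gam (s t q : R) : 3^-1 < s -> s < 1 -> 0 <= q <= 1 -> 288 * t ^+ 2 <= q ->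
  (1 - q) `^ s * (1 + 96 * t ^+ 2) <= 1.
Proof.
move=> s13 s1 /andP[q0 q1] tq.
have h1 : 0 < s < 1 by apply/andP; split; lra.
have h2 : 0 <= 1 - q by lra.
have A := wamgm1 h1 h2.
have B : 0 <= 1 + 96 * t ^+ 2 by have := sqr_ge0 t; lra.
apply: (le_trans (ler_wpM2r B A)).
have e1 : 0 <= (s - 3^-1) * q by apply: mulr_ge0; lra.
have e2 : 0 <= s * q * t ^+ 2.
  by apply: mulr_ge0; [apply: mulr_ge0; lra|apply: sqr_ge0].
have -> : (s * (1 - q) + (1 - s)) * (1 + 96 * t ^+ 2) =
   1 + 96 * t ^+ 2 - s * q - 96 * (s * q * t ^+ 2) by ring.
lra.
Qed.

Lemma powR2 (x r : R) : 0 <= x -> x `^ (2 * r) = (x `^ r) ^+ 2.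
Proof.
move=> x0; rewrite mulrC powRrM -powR_mulrn //; exact: powR_ge0.
Qed.

Lemma Fbound (s t q u v : R) : 3^-1 < s -> s < 2^-1 -> 0 <= t <= 2^-1 ->
  0 <= q <= 1 -> 288 * t ^+ 2 <= q -> 0 <= u <= 1 -> 0 <= v <= 1 ->
  (((1 - t) ^+ 2 * (1 - q)) `^ s) * ((1 - u) * (1 - v)) `^ (1 - s) +
  ((1 - q) * t) `^ s * (u `^ (1 - s) + v `^ (1 - s)) <= 1.
Proof.
move=> s13 s12 /andP[t0 t1] /andP[q0 q1] tq /andP[u0 u1] /andP[v0 v1].
have Hu := @Hsmall s t u s13 s12 (introT andP (conj t0 t1)) (introT andP (conj u0 u1)).
have Hv := @Hsmall s t v s13 s12 (introT andP (conj t0 t1)) (introT andP (conj v0 v1)).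
have Gq := @Gam s t q s13 ltac:(lra) (introT andP (conj q0 q1)) tq.
have t'0 : 0 <= 1 - t by lra.
have q'0 : 0 <= 1 - q by lra.
have u'0 : 0 <= 1 - u by lra.
have v'0 : 0 <= 1 - v by lra.
have E1 : (((1 - t) ^+ 2 * (1 - q)) `^ s) = ((1 - t) `^ s) ^+ 2 * (1 - q) `^ s.
  by rewrite powRM ?sqr_ge0 // expr2 powRM.
have E2 : ((1 - u) * (1 - v)) `^ (1 - s) = (1 - u) `^ (1 - s) * (1 - v) `^ (1 - s).
  by rewrite powRM.
have E3 : ((1 - q) * t) `^ s = (1 - q) `^ s * t `^ s by rewrite powRM.
rewrite E1 E2 E3.
rewrite !powR2 // in Hu Hv.
have P0 : 0 <= (1 - t) `^ s by apply: powR_ge0.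
have g0 : 0 <= (1 - q) `^ s by apply: powR_ge0.
have U0 : 0 <= (1 - u) `^ (1 - s) by apply: powR_ge0.
have V0 : 0 <= (1 - v) `^ (1 - s) by apply: powR_ge0.
have ts0 : 0 <= t `^ s by apply: powR_ge0.
set P := (1 - t) `^ s in P0 Hu Hv *.
set g := (1 - q) `^ s in g0 Gq *.
set U := (1 - u) `^ (1 - s) in U0 Hu *.
set V := (1 - v) `^ (1 - s) in V0 Hv *.
set T := t `^ s in ts0 Hu Hv *.
set X := u `^ (1 - s) in Hu *.
set Y := v `^ (1 - s) in Hv *.
have UV : U * V <= (U ^+ 2 + V ^+ 2) / 2.
  have := sqr_ge0 (U - V); rewrite sqrrB; lra.
have h := ler_wpM2l (mulr_ge0 g0 (sqr_ge0 P)) UV.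
have -> : P ^+ 2 * g * (U * V) + g * T * (X + Y) =
   g * P ^+ 2 * (U * V) + g * T * (X + Y) by ring.
apply: (le_trans (lerD h (lexx _))).
have -> : g * P ^+ 2 * ((U ^+ 2 + V ^+ 2) / 2) + g * T * (X + Y)
   = g * ((P ^+ 2 * U ^+ 2 + 2 * (T * X) + (P ^+ 2 * V ^+ 2 + 2 * (T * Y))) / 2).
  by field.
have C : g * ((P ^+ 2 * U ^+ 2 + 2 * (T * X) + (P ^+ 2 * V ^+ 2 + 2 * (T * Y))) / 2)
   <= g * (1 + 96 * t ^+ 2).
  apply: ler_wpM2l => //. lra.
exact: le_trans C Gq.
Qed.

Lemma select (s t q u v xA xB xC rA rB rC : R) : 3^-1 < s -> s < 2^-1 ->
  0 <= t <= 2^-1 -> 0 <= q <= 1 -> 288 * t ^+ 2 <= q ->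
  0 <= u <= 1 -> 0 <= v <= 1 ->
  0 <= rA <= (1 - u) * (1 - v) -> 0 <= rB <= u -> 0 <= rC <= v ->
  0 <= xA -> 0 <= xB -> 0 <= xC -> xA + xB + xC = 1 ->
  [\/ 0 < xA /\ ((1 - t) ^+ 2 * (1 - q)) `^ s * rA `^ (1 - s) <= xA,
       0 < xB /\ ((1 - q) * t) `^ s * rB `^ (1 - s) <= xB |
       0 < xC /\ ((1 - q) * t) `^ s * rC `^ (1 - s) <= xC].
Proof.
move=> s13 s12 ht hq tq hu hv /andP[rA0 rA1] /andP[rB0 rB1] /andP[rC0 rC1]
  xA0 xB0 xC0 xs.
have F := @Fbound s t q u v s13 s12 ht hq tq hu hv.
have s'0 : 0 <= 1 - s by lra.
have mono : forall y z : R, 0 <= y -> y <= z -> y `^ (1 - s) <= z `^ (1 - s).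
  by move=> y z y0 yz; apply: ge0_ler_powR; rewrite ?nnegrE //; apply: le_trans yz.
have cA0 : 0 <= ((1 - t) ^+ 2 * (1 - q)) `^ s by apply: powR_ge0.
have cB0 : 0 <= ((1 - q) * t) `^ s by apply: powR_ge0.
have bA := ler_wpM2l cA0 (mono _ _ rA0 rA1).
have bB := ler_wpM2l cB0 (mono _ _ rB0 rB1).
have bC := ler_wpM2l cB0 (mono _ _ rC0 rC1).
set BA := ((1 - t) ^+ 2 * (1 - q)) `^ s * rA `^ (1 - s) in bA *.
set BB := ((1 - q) * t) `^ s * rB `^ (1 - s) in bB *.
set BC := ((1 - q) * t) `^ s * rC `^ (1 - s) in bC *.
have Fs : BA + BB + BC <= 1.
  apply: (le_trans _ F); rewrite [_ * (u `^ _ + _)]mulrDr; lra.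
have BA0 : 0 <= BA by apply: mulr_ge0 => //; apply: powR_ge0.
have BB0 : 0 <= BB by apply: mulr_ge0 => //; apply: powR_ge0.
have BC0 : 0 <= BC by apply: mulr_ge0 => //; apply: powR_ge0.
case: (ltrP 0 xA) => hA; first case: (lerP BA xA) => hA'.
- by constructor 1.
- case: (ltrP 0 xB) => hB; first case: (lerP BB xB) => hB'.
  + by constructor 2.
  + case: (ltrP 0 xC) => hC; first case: (lerP BC xC) => hC'.
    * by constructor 3.
    * lra.
    * lra.
  + case: (ltrP 0 xC) => hC; first case: (lerP BC xC) => hC'.
    * by constructor 3.
    * lra.
    * lra.
- case: (ltrP 0 xB) => hB; first case: (lerP BB xB) => hB'.
  + by constructor 2.
  + case: (ltrP 0 xC) => hC; first case: (lerP BC xC) => hC'.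
    * by constructor 3.
    * lra.
    * lra.
  + case: (ltrP 0 xC) => hC; first case: (lerP BC xC) => hC'.
    * by constructor 3.
    * lra.
    * lra.
Qed.

Lemma conv (th c x r D S : R) : 0 < th -> 0 <= c -> 0 < r -> 0 <= D -> 0 <= S ->
  c `^ (th^-1) * r `^ (1 - th^-1) <= x ->
  c * (D `^ th * S) <= ((x / r) * D) `^ th * (r * S).
Proof.
move=> th0 c0 r0 D0 S0 hx.
set s := th^-1.
have sth : s * th = 1 by rewrite mulVf // gt_eqF.
have cs0 : 0 <= c `^ s by apply: powR_ge0.
have rs0 : 0 <= r `^ (- s) by apply: powR_ge0.
have e1 : r `^ (1 - s) = r * r `^ (- s).
  rewrite powRD ?powRr1 //; [lra|apply/implyP => _; rewrite gt_eqF //].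
have x0 : 0 <= x by apply: le_trans hx; apply: mulr_ge0 => //; apply: powR_ge0.
have h1 : c `^ s * r `^ (- s) <= x / r.
  rewrite ler_pdivlMr // -mulrA (mulrC _ r) -e1 //.
have h2 : (c `^ s * r `^ (- s)) `^ th <= (x / r) `^ th.
  apply: ge0_ler_powR; rewrite ?nnegrE //; [lra|exact: mulr_ge0|apply: divr_ge0; lra].
have e2 : (c `^ s * r `^ (- s)) `^ th = c / r.
  rewrite powRM // -!powRrM sth mulNr sth powRr1 // powR_inv1 //; lra.
rewrite e2 in h2.
rewrite powRM ?divr_ge0 //; last lra.
have D'0 : 0 <= D `^ th by apply: powR_ge0.
have : c <= (x / r) `^ th * r by rewrite -ler_pdivrMr.
move=> h3.
have := ler_wpM2r (mulr_ge0 D'0 S0) h3.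
move=> h4; suff -> : (x / r) `^ th * D `^ th * (r * S) = (x / r) `^ th * r * (D `^ th * S) by [].
ring.
Qed.
End An.

End MT2.
Import MT2.

Module MT4.
Local Open Scope ring_scope.
Local Open Scope fset_scope.

Lemma rden_gt0 v : (0 < rden v)%N.
Proof. by rewrite /rden absz_gt0 gt_eqF // denq_gt0. Qed.

Lemma rnum_gt0 {v} : 0 < v -> (0 < rnum v)%N.
Proof. by move=> v0; rewrite /rnum absz_gt0 gt_eqF // numq_gt0. Qed.

Lemma rcop v : coprime (rnum v) (rden v).
Proof. exact: coprime_num_den. Qed.

Lemma cop_log p m n : prime p -> (0 < m)%N -> (0 < n)%N -> coprime m n -> (p %| n)%N ->
  logn p m = 0%N /\ (0 < logn p n)%N.
Proof.
move=> pp m0 n0 cmn pn; split; last by rewrite logn_gt0 mem_primes pp n0.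
apply/eqP; rewrite -leqn0 leqNgt logn_gt0 mem_primes pp m0 /=.
apply/negP => pm.
have : (p %| gcdn m n)%N by rewrite dvdn_gcd pm.
by rewrite (eqP cmn) dvdn1 => /eqP p1; rewrite p1 in pp.
Qed.
Arguments cop_log {p m n}.

Lemma ep_neg p v : prime p -> 0 < v -> (p %| rden v)%N -> ep p v < 0.
Proof.
move=> pp v0 pd.
have [h1 h2] := cop_log pp (rnum_gt0 v0) (rden_gt0 v) (rcop v) pd.
rewrite /ep h1; lia.
Qed.

Lemma ep_pos p v : prime p -> 0 < v -> (p %| rnum v)%N -> 0 < ep p v.
Proof.
move=> pp v0 pd.
have cc : coprime (rden v) (rnum v) by rewrite coprime_sym; exact: rcop.
have [h1 h2] := cop_log pp (rden_gt0 v) (rnum_gt0 v0) cc pd.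
rewrite /ep h1; lia.
Qed.

Arguments ep_neg {p v}.
Arguments ep_pos {p v}.

Lemma ep_le0 p v : prime p -> 0 < v -> ep p v <= 0 ->
  logn p (rnum v) = 0%N /\ (logn p (rden v))%:Z = - ep p v.
Proof.
move=> pp v0 e0.
have h : logn p (rnum v) = 0%N.
  apply/eqP; rewrite -leqn0 leqNgt; apply/negP => /[dup] h.
  rewrite logn_gt0 mem_primes => /and3P[_ _ pd].
  have := ep_pos pp v0 pd; lia.
split => //; rewrite /ep h; lia.
Qed.
Arguments ep_le0 {p v}.

Lemma ineg_eq z : z <= 0 -> (ineg z)%:Z = - z.
Proof. case: z => [n|n] /=. lia. move=> _. rewrite NegzE. lia. Qed.

Lemma ipos_eq z : z <= 0 -> ipos z = 0%N.
Proof. case: z => [n|n] //=. lia. Qed.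
Arguments ipos_eq {z}.
Arguments ineg_eq {z}.

Lemma types (a b k : int) : ((a - k)%R, (b - k)%R) \in [:: (-1, 0); (0, -1); (0, 0); (0, 1); (1, 0)] ->
  ((a = k - 1 /\ b = k) \/ (a = k /\ b = k - 1) \/ (a = k /\ b = k) \/ (a = k /\ b = k + 1) \/ (a = k + 1 /\ b = k))%R.
Proof.
rewrite !inE !xpair_eqE.
case/orP => [/andP[/eqP h1 /eqP h2]|]; first by left; lia.
case/orP => [/andP[/eqP h1 /eqP h2]|]; first by right; left; lia.
case/orP => [/andP[/eqP h1 /eqP h2]|]; first by right; right; left; lia.
case/orP => [/andP[/eqP h1 /eqP h2]|/andP[/eqP h1 /eqP h2]]; first by right; right; right; left; lia.
by right; right; right; right; lia.
Qed.
Arguments types {a b k}.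

Section G.
Variable R : realType.

Definition newG (G : GCDGraph R) (V W : {fset rat}) (E : {fset rat * rat}) (p : nat)
  (fp gp : int) : GCDGraph R :=
  mkGCDGraph (gmu G) V W E (p |` gP G) (fun q => if q == p then fp else gf G q)
    (fun q => if q == p then gp else gg G q).

Lemma newG_ok (G : GCDGraph R) V W E p fp gp :
  is_gcd_graph G -> prime p -> p \notin gP G -> fp <= 0 -> gp <= 0 ->
  V `<=` gV G -> W `<=` gW G ->
  (forall e, e \in E -> [&& e \in gE G, e.1 \in V & e.2 \in W]) ->
  (forall v, v \in V -> ep p v <= fp) -> (forall w, w \in W -> ep p w <= gp) ->
  (forall e, e \in E -> (ep p e.1 == fp) && (gp <= fp) || (ep p e.2 == gp) && (fp <= gp)) ->
  [/\ is_gcd_graph (newG G V W E p fp gp), gcd_subgraph (newG G V W E p fp gp) G &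
      numerator_exact (newG G V W E p fp gp) G].
Proof.
move=> [[mu0 [Vp [Wp Ep]]] [Pp Hq]] pp pP f0 g0 VV WW EE Vb Wb Eb.
have vpos v : v \in V -> 0 < v by move=> /(fsubsetP VV); apply: Vp.
have wpos w : w \in W -> 0 < w by move=> /(fsubsetP WW); apply: Wp.
split.
- split; first split => //.
    split; first by move=> v /(fsubsetP VV); apply: Vp.
    split; first by move=> v /(fsubsetP WW); apply: Wp.
    by move=> e /EE /and3P[_ -> ->].
  split.
    by move=> q /=; rewrite in_fset1U => /orP[/eqP ->//|]; apply: Pp.
  move=> q /=; rewrite in_fset1U => /orP[/eqP ->|qP].
  + rewrite eqxx; split; last split.
    * move=> v vV; have [h1 h2] := ep_le0 pp (vpos v vV) (le_trans (Vb v vV) f0).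
      rewrite ipos_eq // expn0 dvd1n; split => //.
      rewrite pfactor_dvdn //; last exact: rden_gt0.
      have := ineg_eq f0; have := Vb v vV; lia.
    * move=> w wW; have [h1 h2] := ep_le0 pp (wpos w wW) (le_trans (Wb w wW) g0).
      rewrite ipos_eq // expn0 dvd1n; split => //.
      rewrite pfactor_dvdn //; last exact: rden_gt0.
      have := ineg_eq g0; have := Wb w wW; lia.
    * move=> e eE; have /and3P[_ e1 e2] := EE e eE.
      have [h1 h2] := ep_le0 pp (vpos _ e1) (le_trans (Vb _ e1) f0).
      have [h3 h4] := ep_le0 pp (wpos _ e2) (le_trans (Wb _ e2) g0).
      have n1 := rnum_gt0 (vpos _ e1); have n2 := rnum_gt0 (wpos _ e2).
      have d1 := rden_gt0 e.1; have d2 := rden_gt0 e.2.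
      rewrite !logn_gcd // h1 h3 (ipos_eq f0) (ipos_eq g0).
      split => //.
      have i1 := ineg_eq f0; have i2 := ineg_eq g0; have b1 := Vb _ e1; have b2 := Wb _ e2.
      case/orP: (Eb e eE) => /andP[/eqP E1 E2]; clear -h2 h4 i1 i2 b1 b2 E1 E2; set a := ep p e.1 in h2 b1 E1 *; set b := ep p e.2 in h4 b2 E1 E2 *; set l1 := logn p (rden e.1) in h2 *; set l2 := logn p (rden e.2) in h4 *; lia.
  + have qp : (q == p) = false by apply/negbTE; apply: contraNneq pP => <-.
    rewrite qp; have [HV [HW HE]] := Hq q qP; split; last split.
    * by move=> v /(fsubsetP VV); apply: HV.
    * by move=> w /(fsubsetP WW); apply: HW.
    * by move=> e /EE /andP[/HE].
- split => //; split => //; split => //; split.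
    by apply/fsubsetP => e /EE /andP[].
  split; first exact: fsubsetU1.
  move=> q qP /=; have -> : (q == p) = false by apply/negbTE; apply: contraNneq pP => <-.
  by [].
- move=> q /=; rewrite in_fset1U => /orP[/eqP ->|->] // _.
  rewrite eqxx; split.
  + move=> v vV; have [h1 h2] := ep_le0 pp (vpos v vV) (le_trans (Vb v vV) f0).
    by rewrite h1 ipos_eq.
  + move=> w wW; have [h1 h2] := ep_le0 pp (wpos w wW) (le_trans (Wb w wW) g0).
    by rewrite h1 ipos_eq.
Qed.
End G.

End MT4.
Import MT4.

Module MT6.
Local Open Scope ring_scope.
Local Open Scope fset_scope.

Section M.
Variable R : realType.

Lemma argmax (T : eqType) (s : seq T) (F : T -> R) x0 : x0 \in s ->
  exists2 x, x \in s & forall y, y \in s -> F y <= F x.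
Proof.
elim: s x0 => // a s IH x0 _.
case: s IH => [|b s] IH.
  by exists a; rewrite ?mem_head // => y; rewrite inE => /eqP ->.
have [x xs Hx] := IH b (mem_head _ _).
have [le|lt] := lerP (F a) (F x).
- exists x; first by rewrite inE xs orbT.
  by move=> y; rewrite inE => /orP[/eqP ->|/Hx].
- exists a; first exact: mem_head.
  move=> y; rewrite inE => /orP[/eqP ->//|/Hx h]; apply: le_trans h _; exact: ltW.
Qed.

Lemma exists_max (th : R) mu (V W : {fset rat}) (E : {fset rat * rat}) :
  exists V' W' E', [/\ V' `<=` V, W' `<=` W,
    (forall e, e \in E' -> [&& e \in E, e.1 \in V' & e.2 \in W']) &
    (forall V2 W2 E2, V2 `<=` V -> W2 `<=` W ->
      (forall e, e \in E2 -> [&& e \in E, e.1 \in V2 & e.2 \in W2]) ->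
      mu_theta th mu V2 W2 E2 <= mu_theta th mu V' W' E')].
Proof.
pose ok (x : ({fset rat} * {fset rat}) * {fset rat * rat}) :=
  all (fun e => [&& e \in E, e.1 \in x.1.1 & e.2 \in x.1.2]) x.2.
pose L := [seq x <- [seq (x, y) | x <- [seq (A, B) | A <- fpowerset V, B <- fpowerset W],
                     y <- fpowerset E] | ok x].
have inL V2 W2 E2 : V2 `<=` V -> W2 `<=` W ->
    (forall e, e \in E2 -> [&& e \in E, e.1 \in V2 & e.2 \in W2]) ->
    ((V2, W2), E2) \in L.
  move=> VV WW EE; rewrite /L (mem_filter ok); apply/andP; split.
    by apply/allP => e /EE.
  apply: allpairs_f; first by apply: allpairs_f; rewrite fpowersetE.
  by rewrite fpowersetE; apply/fsubsetP => e /EE /and3P[].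
have [x xL Hx] := @argmax _ _ (fun x => mu_theta th mu x.1.1 x.1.2 x.2)
  _ (inL fset0 fset0 fset0 (fsub0set _) (fsub0set _) (fun e (h : e \in fset0) => ltac:(by rewrite inE in h))).
move: xL; rewrite /L (mem_filter ok) => /andP[/allP okx].
case/allpairsP => -[ab y] /= [abL yE xe]; subst x.
move: abL; case/allpairsP => -[A B] /= [AV BW abe]; subst ab.
exists A, B, y; split.
- by rewrite -fpowersetE.
- by rewrite -fpowersetE.
- by move=> e ey; apply: okx.
- by move=> V2 W2 E2 VV WW EE; apply: (Hx ((V2, W2), E2)); apply: inL.
Qed.
End M.

End MT6.
Import MT6.

Module MT7.
Local Open Scope ring_scope.
Local Open Scope fset_scope.

Section R.
Variable R : realType.

Lemma inR_sub {G G' : GCDGraph R} {q} : gE G' `<=` gE G -> gP G `<=` gP G' ->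
  inR G' q -> inR G q.
Proof.
move=> EE PP [qp [qP [e [eE he]]]]; split => //; split.
  by apply: contra qP; apply: (fsubsetP PP).
by exists e; split => //; apply: (fsubsetP EE).
Qed.

Lemma witness_sign {q} {x y : rat} : prime q -> 0 < x -> 0 < y ->
  (q %| gcdn (rnum x) (rnum y) * gcdn (rden x) (rden y))%N ->
  (0 < ep q x /\ 0 < ep q y) \/ (ep q x < 0 /\ ep q y < 0).
Proof.
move=> qp x0 y0; rewrite Euclid_dvdM // => /orP[|]; rewrite dvdn_gcd => /andP[h1 h2].
- by left; split; apply: ep_pos.
- by right; split; apply: ep_neg.
Qed.

Lemma struct_sign {G : GCDGraph R} {q} : structured G -> inR G q ->
  ((exists e, e \in gE G /\ ep q e.1 < 0 /\ ep q e.2 < 0) ->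
     forall e, e \in gE G -> ep q e.1 <= 0 /\ ep q e.2 <= 0) /\
  ((exists e, e \in gE G /\ 0 < ep q e.1 /\ 0 < ep q e.2) ->
     forall e, e \in gE G -> 0 <= ep q e.1 /\ 0 <= ep q e.2).
Proof.
move=> st hq; have [k Hk] := st q hq.
split.
- move=> [e0 [e0E [h1 h2]]] e eE.
  have T0 := types (Hk e0 e0E); have T1 := types (Hk e eE).
  move: T0 T1 h1 h2; set a := ep q e0.1; set b := ep q e0.2; set c := ep q e.1; set d := ep q e.2.
  move=> T0 T1 h1 h2; lia.
- move=> [e0 [e0E [h1 h2]]] e eE.
  have T0 := types (Hk e0 e0E); have T1 := types (Hk e eE).
  move: T0 T1 h1 h2; set a := ep q e0.1; set b := ep q e0.2; set c := ep q e.1; set d := ep q e.2.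
  move=> T0 T1 h1 h2; lia.
Qed.

Lemma inRminus_sub (G G' : GCDGraph R) q : is_gcd_graph G -> structured G ->
  gE G' `<=` gE G -> gP G `<=` gP G' -> inRminus G' q -> inRminus G q.
Proof.
move=> [[_ [Vp [Wp Ep]]] _] st EE PP [hR hb].
have hR' := inR_sub EE PP hR.
split => //.
have [qp [_ [e [eE hd]]]] := hR.
have eG : e \in gE G by apply: (fsubsetP EE).
have /andP[e1 e2] := Ep e eG.
case: (witness_sign qp (Vp _ e1) (Wp _ e2) hd) => [[h1 h2]|[h1 h2]].
  by have [h3 h4] := hb e eE; move: h1 h3; set a := ep q e.1; lia.
by apply: (proj1 (struct_sign st hR')); exists e.
Qed.

Lemma inRplus_sub (G G' : GCDGraph R) q : is_gcd_graph G -> structured G ->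
  gE G' `<=` gE G -> gP G `<=` gP G' -> inRplus G' q -> inRplus G q.
Proof.
move=> [[_ [Vp [Wp Ep]]] _] st EE PP [hR hb].
have hR' := inR_sub EE PP hR.
split => //.
have [qp [_ [e [eE hd]]]] := hR.
have eG : e \in gE G by apply: (fsubsetP EE).
have /andP[e1 e2] := Ep e eG.
case: (witness_sign qp (Vp _ e1) (Wp _ e2) hd) => [[h1 h2]|[h1 h2]].
  by apply: (proj2 (struct_sign st hR')); exists e.
by have [h3 h4] := hb e eE; move: h1 h3; set a := ep q e.1; lia.
Qed.

End R.

End MT7.
Import MT7.

Module MT8.
Local Open Scope ring_scope.
Local Open Scope fset_scope.

Lemma mu_theta0 (R : realType) (th : R) mu V W : th != 0 ->
  mu_theta th mu V W fset0 = 0.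
Proof. by move=> th0; rewrite /mu_theta /density eqxx powR0 // !mul0r. Qed.

Lemma finish (R : realType) (tau : R) (G : GCDGraph R) (p : nat) (fp gp : int)
  (V W : {fset rat}) (E : {fset rat * rat}) :
  0 < tau -> is_gcd_graph G -> structured G -> inRminus G p ->
  fp <= 0 -> gp <= 0 -> V `<=` gV G -> W `<=` gW G ->
  (forall e, e \in E -> [&& e \in gE G, e.1 \in V & e.2 \in W]) ->
  (forall v, v \in V -> ep p v <= fp) -> (forall w, w \in W -> ep p w <= gp) ->
  (forall e, e \in E -> (ep p e.1 == fp) && (gp <= fp) || (ep p e.2 == gp) && (fp <= gp)) ->
  0 < mu_theta (2 + tau) (gmu G) V W E ->
  quality (2 + tau) G *
    ((1 - (((fp == gp) && (fp < 0))%:R / p%:R)) ^+ 2 *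
         (1 - 1 / powR (p%:R) (1 + tau / 4)))
   <= mu_theta (2 + tau) (gmu G) V W E *
      (p%:R ^+ `|fp - gp|%N * \prod_(q <- gP G) (q%:R ^+ `|gf G q - gg G q|%N)) ->
  exists G' : GCDGraph R,
    [/\ is_gcd_graph G', gcd_subgraph G' G & numerator_exact G' G] /\
    (nontrivial G' /\ maximal (2 + tau) G') /\
    [/\ gP G `<` gP G',
        (forall p, p \in gP G' -> p \in gP G \/ inRminus G p),
        (forall p, inRminus G' p -> inRminus G p) /\
          (exists p, inRminus G p /\ ~ inRminus G' p)
      & (forall p, inRplus G' p -> inRplus G p)] /\
    (forall p, p \in gP G' `\` gP G -> gf G' p <= 0 /\ gg G' p <= 0) /\
    quality (2 + tau) G *
      \prod_(p <- gP G' `\` gP G)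
        ((1 - (((gf G' p == gg G' p) && (gf G' p < 0))%:R / p%:R)) ^+ 2 *
         (1 - 1 / powR (p%:R) (1 + tau / 4)))
    <= quality (2 + tau) G'.
Proof.
move=> tau0 gG st hp f0 g0 VG WG EG Vb Wb Eb mpos HQ.
have [[pp [pP _]] _] := hp.
have [V' [W' [E' [VV WW EE Hmax]]]] := @exists_max R (2 + tau) (gmu G) V W E.
have mle : mu_theta (2 + tau) (gmu G) V W E <= mu_theta (2 + tau) (gmu G) V' W' E'.
  apply: Hmax; [exact: fsubset_refl | exact: fsubset_refl | ].
  by move=> e eE; have /and3P[_ -> ->] := EG e eE; rewrite eE.
have E'G : forall e, e \in E' -> [&& e \in gE G, e.1 \in V' & e.2 \in W'].
  by move=> e /EE /and3P[/EG /and3P[-> _ _] -> ->].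
have [gG' sub nex] := @newG_ok R G V' W' E' p fp gp gG pp pP f0 g0
  (fsubset_trans VV VG) (fsubset_trans WW WG) E'G
  (fun v vV => Vb v (fsubsetP VV v vV)) (fun w wW => Wb w (fsubsetP WW w wW))
  (fun e eE => Eb e (proj1 (andP (EE e eE)))).
have E'sub : E' `<=` gE G by apply/fsubsetP => e /E'G /and3P[].
have PP : gP G `<=` p |` gP G by exact: fsubsetU1.
exists (@newG R G V' W' E' p fp gp); split; first by split.
split.
  split.
  - rewrite /nontrivial /=; apply/negP => /eqP E0.
    move: mle; rewrite E0 mu_theta0; last by apply/negP => /eqP h; lra.
    lra.
  - move=> V2 W2 E2 /= h1 h2 h3; rewrite /gmu_theta /=.
    apply: Hmax; first exact: fsubset_trans h1 VV.
      exact: fsubset_trans h2 WW.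
    move=> e /h3 /and3P[/EE /and3P[-> _ _] -> ->] //.
split.
  split => /=.
  - rewrite fproperE PP /=; apply/negP => /fsubsetP h.
    by have := h p (fsetU11 _ _); rewrite (negbTE pP).
  - by move=> q; rewrite in_fset1U => /orP[/eqP ->|qP]; [right|left].
  - split.
      by move=> q; apply: inRminus_sub.
    exists p; split => // -[[_ [/= h _]] _].
    by rewrite fsetU11 in h.
  - by move=> q; apply: inRplus_sub.
split.
  move=> q /=; rewrite in_fsetD in_fset1U => /andP[qn /orP[/eqP ->|qP]].
    by rewrite eqxx.
  by rewrite qP in qn.
have -> : (p |` gP G) `\` gP G = [fset p].
  apply/fsetP => q; rewrite !inE; case: eqP => [->|] //=; first by rewrite pP.
  by rewrite andNb.
rewrite big_seq_fset1 /= eqxx.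
rewrite /quality /gmu_theta /= big_fsetU1 //= eqxx.
have -> : \prod_(q <- gP G) (q%:R ^+ `|(if q == p then fp else gf G q) -
              (if q == p then gp else gg G q)|%N : R)
        = \prod_(q <- gP G) (q%:R ^+ `|gf G q - gg G q|%N).
  apply: eq_fbigr => q qP _.
  by have -> : (q == p) = false by apply/negbTE; apply: contraNneq pP => <-.
apply: (le_trans HQ).
apply: ler_wpM2r => //.
apply: mulr_ge0; first by apply: exprn_ge0; apply: ler0n.
by apply: prodr_ge0 => q _; apply: exprn_ge0; apply: ler0n.
Qed.

End MT8.
Import MT8.

Module MT9.
Local Open Scope fset_scope.
Local Open Scope ring_scope.

Section S.
Variable R : realType.
Variable T : choiceType.

Lemma sumF (X : {fset T}) (P : pred T) (F : T -> R) :
  \sum_(x <- [fset x in X | P x]) F x = \sum_(x <- X) (if P x then F x else 0).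
Proof. by rewrite -big_fset_condE big_mkcond. Qed.

Lemma sum_filter2 (X : {fset T}) (P1 P2 : pred T) (F : T -> R) :
  (forall x, x \in X -> 0 <= F x) -> (forall x, x \in X -> ~~ (P1 x && P2 x)) ->
  \sum_(x <- [fset x in X | P1 x]) F x + \sum_(x <- [fset x in X | P2 x]) F x
    <= \sum_(x <- X) F x.
Proof.
move=> F0 D; rewrite !sumF -big_split /= big_seq [X in _ <= X]big_seq.
apply: ler_sum => x xX; have := D x xX; have := F0 x xX.
by case: (P1 x); case: (P2 x) => //= ? ?; lra.
Qed.

Lemma sum_filter (X : {fset T}) (P : pred T) (F : T -> R) :
  (forall x, x \in X -> 0 <= F x) ->
  \sum_(x <- [fset x in X | P x]) F x <= \sum_(x <- X) F x.
Proof.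
move=> F0; rewrite sumF big_seq [X in _ <= X]big_seq.
apply: ler_sum => x xX; have := F0 x xX; case: (P x) => //= ?; lra.
Qed.

Lemma sum_filter3 (X : {fset T}) (P1 P2 P3 : pred T) (F : T -> R) :
  (forall x, x \in X -> (P1 x + P2 x + P3 x = 1)%N) ->
  \sum_(x <- X) F x = \sum_(x <- [fset x in X | P1 x]) F x +
    \sum_(x <- [fset x in X | P2 x]) F x + \sum_(x <- [fset x in X | P3 x]) F x.
Proof.
move=> D; rewrite !sumF -!big_split /= big_seq [X in _ = X]big_seq.
apply: eq_bigr => x xX; have := D x xX.
by case: (P1 x); case: (P2 x); case: (P3 x) => //= _; rewrite ?addr0 ?add0r.
Qed.

Lemma sum_pos (X : {fset T}) (F : T -> R) x :
  (forall x, x \in X -> 0 <= F x) -> x \in X -> 0 < F x -> 0 < \sum_(y <- X) F y.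
Proof.
move=> F0 xX Fx; rewrite (big_fsetD1 _ xX) /=.
apply: ltr_wpDr => //; rewrite big_seq; apply: sumr_ge0 => y.
by rewrite in_fsetD1 => /andP[_ /F0].
Qed.

Lemma sum_empty (F : T -> R) : \sum_(x <- (fset0 : {fset T})) F x = 0.
Proof. by rewrite big_seq_fset0. Qed.
End S.

Lemma option_real (R : realType) (tau c SV SW ET MV MW ME : R) :
  0 < tau -> 0 < SV -> 0 < SW -> 0 < ET -> 0 < MV -> 0 < MW -> 0 <= c ->
  c `^ ((2 + tau)^-1) * (MV * MW / (SV * SW)) `^ (1 - (2 + tau)^-1) <= ME / ET ->
  c * (powR (ET / (SV * SW)) (2 + tau) * SV * SW) <=
    powR (ME / (MV * MW)) (2 + tau) * MV * MW.
Proof.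
move=> t0 sv sw et mv mw c0 h.
have r0 : 0 < MV * MW / (SV * SW) by apply: divr_gt0; apply: mulr_gt0.
have := @conv R (2 + tau) c (ME / ET) (MV * MW / (SV * SW)) (ET / (SV * SW)) (SV * SW)
  ltac:(lra) c0 r0 (ltW (divr_gt0 et (mulr_gt0 sv sw))) (ltW (mulr_gt0 sv sw)) h.
have e1 : ME / ET / (MV * MW / (SV * SW)) * (ET / (SV * SW)) = ME / (MV * MW).
  by field; rewrite !gt_eqF.
have e2 : MV * MW / (SV * SW) * (SV * SW) = MV * MW.
  by field; rewrite !gt_eqF.
rewrite e1 e2 => H.
by rewrite -(mulrA _ SV) -(mulrA _ MV).
Qed.

Lemma part3 (a b k : int) :
  ((a = k - 1 /\ b = k) \/ (a = k /\ b = k - 1) \/ (a = k /\ b = k) \/ (a = k /\ b = k + 1) \/ (a = k + 1 /\ b = k)) ->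
  addn (addn (nat_of_bool ((a <= k) && (b <= k))) (nat_of_bool (a == k + 1))) (nat_of_bool (b == k + 1)) = 1%N.
Proof.
move=> T.
case h1: (a <= k); case h2: (b <= k); case h3: (a == k + 1); case h4: (b == k + 1) => //=; lia.
Qed.

Lemma C6_big (R : realType) (tau M : R) : 0 < tau -> tau < 1 -> 2 <= M -> 288 * 288 <= C6 tau M.
Proof.
move=> t0 t1 M2.
have C1g : 1 <= C1 tau.
  rewrite /C1 ler_pdivlMr // mul1r; apply: le_trans (ltW t1) _.
  by rewrite -natrX ler1n.
have C13 : 1 <= C1 tau ^+ 3 by apply: exprn_ege1.
have C2g : 1 <= C2 tau M.
  rewrite /C2; have : 0 <= C1 tau ^+ 3 by lra. nra.
have C22 : 1 <= C2 tau M ^+ 2 by apply: exprn_ege1.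
have M22 : 4 <= M ^+ 2 by nra.
have C4g : 288 * 288 <= C4 tau M.
  rewrite /C4.
  have e : (10 : R) ^+ 10 = (10 ^+ 3) ^+ 2 * 10 ^+ 4 by rewrite -exprM -exprD.
  have e3 : (10 : R) ^+ 3 = 1000 by rewrite !exprS expr0; lra.
  have e4 : (1 : R) <= 10 ^+ 4 by apply: exprn_ege1; lra.
  have h : (288 * 288 : R) <= 10 ^+ 10 by rewrite e e3; nra.
  have : 0 <= C2 tau M ^+ 2 by lra.
  nra.
by rewrite /C6 le_max C4g.
Qed.

Lemma q_bound (R : realType) (tau p : R) : 0 < tau -> tau < 1 -> 288 * 288 <= p ->
  288 * (p^-1) ^+ 2 <= 1 / powR p (1 + tau / 4) /\ 0 <= 1 / powR p (1 + tau / 4) <= 1.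
Proof.
move=> t0 t1 pb.
have p1 : 1 <= p by lra.
have p0 : 0 < p by lra.
set X := powR p (1 + tau / 4).
have X1 : 1 <= X.
  by rewrite /X -[X in X <= _](powRr0 p); apply: ler_powR => //; lra.
have X0 : 0 < X by lra.
set Y := powR p (1 - tau / 4).
have XY : X * Y = p ^+ 2.
  rewrite /X /Y -powRD; last by apply/implyP => _; rewrite gt_eqF.
  by rewrite -powR_mulrn; [congr (_ `^ _); lra|lra].
set Z := powR p (2^-1).
have Z2 : Z ^+ 2 = p.
  by rewrite /Z -powR2; [rewrite mulfV ?powRr1 //; lra|lra].
have Z0 : 0 <= Z by apply: powR_ge0.
have Z288 : 288 <= Z by nra.
have YZ : Z <= Y by apply: ler_powR => //; lra.
split; last by apply/andP; split; [apply: divr_ge0; lra|rewrite ler_pdivrMr //; lra].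
have Y0 : 0 < Y by lra.
have e1 : 1 / X = Y / p ^+ 2.
  by rewrite -XY; field; rewrite !gt_eqF.
rewrite e1 exprVn; apply: ler_wpM2r; last lra.
by rewrite invr_ge0; apply: exprn_ge0; lra.
Qed.

Lemma sumf_ge0 (R : realType) (T : choiceType) (X : {fset T}) (P : pred T) (F : T -> R) :
  (forall x, x \in X -> 0 <= F x) -> 0 <= \sum_(x <- [fset x in X | P x]) F x.
Proof.
move=> F0; rewrite sumF big_seq; apply: sumr_ge0 => x xX.
by case: (P x) => //; apply: F0.
Qed.

End MT9.
Import MT9.

Module MT10.
Local Open Scope ring_scope.
Local Open Scope fset_scope.

Lemma mu_theta_eq (R : realType) (th : R) mu V W E : E != fset0 ->
  mu_theta th mu V W E = powR (muE mu E / (muS mu V * muS mu W)) th * muS mu V * muS mu W.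
Proof. by move=> h; rewrite /mu_theta /density (negbTE h). Qed.

Lemma opt (R : realType) (tau : R) (G : GCDGraph R) (p : nat) (fp gp : int)
  (V W : {fset rat}) (E : {fset rat * rat}) (c : R) :
  0 < tau -> is_gcd_graph G -> nontrivial G -> structured G -> inRminus G p ->
  fp <= 0 -> gp <= 0 -> V `<=` gV G -> W `<=` gW G ->
  (forall e, e \in E -> [&& e \in gE G, e.1 \in V & e.2 \in W]) ->
  (forall v, v \in V -> ep p v <= fp) -> (forall w, w \in W -> ep p w <= gp) ->
  (forall e, e \in E -> (ep p e.1 == fp) && (gp <= fp) || (ep p e.2 == gp) && (fp <= gp)) ->
  0 < muS (gmu G) (gV G) -> 0 < muS (gmu G) (gW G) -> 0 < muE (gmu G) (gE G) ->
  0 <= c ->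
  0 < muE (gmu G) E / muE (gmu G) (gE G) ->
  c `^ ((2 + tau)^-1) * (muS (gmu G) V * muS (gmu G) W / (muS (gmu G) (gV G) * muS (gmu G) (gW G)))
     `^ (1 - (2 + tau)^-1) <= muE (gmu G) E / muE (gmu G) (gE G) ->
  ((1 - (((fp == gp) && (fp < 0))%:R / p%:R)) ^+ 2 *
         (1 - 1 / powR (p%:R) (1 + tau / 4))) = c * p%:R ^+ `|fp - gp|%N ->
  exists G' : GCDGraph R,
    [/\ is_gcd_graph G', gcd_subgraph G' G & numerator_exact G' G] /\
    (nontrivial G' /\ maximal (2 + tau) G') /\
    [/\ gP G `<` gP G',
        (forall p, p \in gP G' -> p \in gP G \/ inRminus G p),
        (forall p, inRminus G' p -> inRminus G p) /\
          (exists p, inRminus G p /\ ~ inRminus G' p)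
      & (forall p, inRplus G' p -> inRplus G p)] /\
    (forall p, p \in gP G' `\` gP G -> gf G' p <= 0 /\ gg G' p <= 0) /\
    quality (2 + tau) G *
      \prod_(p <- gP G' `\` gP G)
        ((1 - (((gf G' p == gg G' p) && (gf G' p < 0))%:R / p%:R)) ^+ 2 *
         (1 - 1 / powR (p%:R) (1 + tau / 4)))
    <= quality (2 + tau) G'.
Proof.
move=> tau0 gG nt st hp f0 g0 VG WG EG Vb Wb Eb SV0 SW0 ET0 c0 x0 hx hf.
have gG' := gG; move: gG' => [[mu0 [Vp [Wp Ep]]] _].
set mu := gmu G in SV0 SW0 ET0 x0 hx *.
have ME0 : 0 < muE mu E.
  by move: x0; rewrite pmulr_lgt0 // invr_gt0.
have En : E != fset0.
  by apply/negP => /eqP E0; move: ME0; rewrite E0 /muE big_seq_fset0 ltxx.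
have [e eE] := fset0Pn _ En.
have /and3P[eG e1 e2] := EG e eE.
have vpos v : v \in gV G -> 0 < mu (ratr v).
  by move=> vV; apply: mu0; rewrite ltr0q; apply: Vp.
have wpos w : w \in gW G -> 0 < mu (ratr w).
  by move=> wW; apply: mu0; rewrite ltr0q; apply: Wp.
have MV0 : 0 < muS mu V.
  apply: (@sum_pos _ _ _ _ e.1) => //; last by apply: vpos; apply: (fsubsetP VG).
  by move=> v /(fsubsetP VG) /vpos /ltW.
have MW0 : 0 < muS mu W.
  apply: (@sum_pos _ _ _ _ e.2) => //; last by apply: wpos; apply: (fsubsetP WG).
  by move=> w /(fsubsetP WG) /wpos /ltW.
have H := @option_real R tau c _ _ _ _ _ (muE mu E) tau0 SV0 SW0 ET0 MV0 MW0 c0 hx.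
have mpos : 0 < mu_theta (2 + tau) mu V W E.
  rewrite mu_theta_eq //; apply: mulr_gt0 => //; apply: mulr_gt0 => //.
  apply: powR_gt0; apply: divr_gt0 => //; exact: mulr_gt0.
apply: (@finish R tau G p fp gp V W E tau0 gG st hp f0 g0 VG WG EG Vb Wb Eb mpos).
rewrite hf /quality /gmu_theta -/mu (mu_theta_eq _ _ _ _ _ _ (nt : gE G != fset0)) (mu_theta_eq _ _ _ _ _ _ En).
set Pi := \prod_(q <- gP G) _.
set pd := p%:R ^+ _.
have Pi0 : 0 <= Pi by apply: prodr_ge0 => q _; apply: exprn_ge0; apply: ler0n.
have pd0 : 0 <= pd by apply: exprn_ge0; apply: ler0n.
have := ler_wpM2r (mulr_ge0 pd0 Pi0) H.
move=> H2; apply: le_trans H2; rewrite le_eqVlt; apply/orP; left; apply/eqP; ring.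
Qed.

Section Rat.
Local Open Scope ring_scope.
Lemma ratioA (R : realType) (SV SW a b c d : R) : 0 < SV -> 0 < SW -> 0 <= a -> 0 <= b ->
  0 <= c -> 0 <= d -> a + b <= SV -> c + d <= SW ->
  0 <= a * c / (SV * SW) <= (1 - b / SV) * (1 - d / SW).
Proof.
move=> sv sw a0 b0 c0 d0 h1 h2; apply/andP; split.
  by apply: divr_ge0; [apply: mulr_ge0|apply: mulr_ge0; apply: ltW].
have -> : (1 - b / SV) * (1 - d / SW) = (SV - b) * (SW - d) / (SV * SW).
  by field; rewrite !gt_eqF.
apply: ler_wpM2r; first by rewrite invr_ge0; apply: mulr_ge0; apply: ltW.
apply: ler_pM => //; lra.
Qed.

Lemma ratioB (R : realType) (SV SW a c : R) : 0 < SV -> 0 < SW -> 0 <= a ->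
  0 <= c -> c <= SW -> 0 <= a * c / (SV * SW) <= a / SV.
Proof.
move=> sv sw a0 c0 h; apply/andP; split.
  by apply: divr_ge0; [apply: mulr_ge0|apply: mulr_ge0; apply: ltW].
have -> : a * c / (SV * SW) = (a / SV) * (c / SW) by field; rewrite !gt_eqF.
have : c / SW <= 1 by rewrite ler_pdivrMr // mul1r.
have : 0 <= a / SV by apply: divr_ge0 => //; apply: ltW.
nra.
Qed.

Lemma ratioC (R : realType) (SV SW a c : R) : 0 < SV -> 0 < SW -> 0 <= c ->
  0 <= a -> a <= SV -> 0 <= a * c / (SV * SW) <= c / SW.
Proof.
move=> sv sw c0 a0 h.
have := @ratioB R SW SV c a sw sv c0 a0 h; rewrite (mulrC a c) (mulrC SV SW) //.
Qed.

Lemma unit01 (R : realType) (a S : R) : 0 < S -> 0 <= a -> a <= S -> 0 <= a / S <= 1.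
Proof.
move=> s a0 h; apply/andP; split; first by apply: divr_ge0 => //; apply: ltW.
by rewrite ler_pdivrMr // mul1r.
Qed.
End Rat.


End MT10.
Import MT10.

Local Open Scope ring_scope.
Local Open Scope fset_scope.

Theorem proposition7p16 (R : realType) (tau M : R) (G : GCDGraph R) :
  0 < tau -> tau < 1 / 100 -> 2 <= M ->
  is_gcd_graph G -> nontrivial G -> structured G ->
  (forall p, inR G p -> C6 tau M < p%:R) ->
  (exists p, inRminus G p) ->
  exists G' : GCDGraph R,
    [/\ is_gcd_graph G', gcd_subgraph G' G & numerator_exact G' G] /\
    (* (a) *)
    (nontrivial G' /\ maximal (2 + tau) G') /\
    (* (b) *)
    [/\ gP G `<` gP G',
        (forall p, p \in gP G' -> p \in gP G \/ inRminus G p),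
        (forall p, inRminus G' p -> inRminus G p) /\
          (exists p, inRminus G p /\ ~ inRminus G' p)
      & (forall p, inRplus G' p -> inRplus G p)] /\
    (* (c) *)
    (forall p, p \in gP G' `\` gP G -> gf G' p <= 0 /\ gg G' p <= 0) /\
    (* (d) *)
    quality (2 + tau) G *
      \prod_(p <- gP G' `\` gP G)
        ((1 - (((gf G' p == gg G' p) && (gf G' p < 0))%:R / p%:R)) ^+ 2 *
         (1 - 1 / powR (p%:R) (1 + tau / 4)))
    <= quality (2 + tau) G'.
Proof.
move=> tau0 tau1 M2 gG nt st hC [p hp].
have [[pp [pP [e0 [e0E hd]]]] hb] := hp.
have hR := proj1 hp.
have [k Hk] := st p hR.
have gG' := gG; move: gG' => [[mu0 [Vp [Wp Ep]]] _].
have /andP[e01 e02] := Ep e0 e0E.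
have kneg : (k <= -1)%R.
  have T0 := types (Hk e0 e0E).
  case: (witness_sign pp (Vp _ e01) (Wp _ e02) hd) => [[h1 h2]|[h1 h2]].
    have [h3 _] := hb e0 e0E. move: h1 h3; set a := ep p e0.1; lia.
  move: T0 h1 h2; set a := ep p e0.1; set b := ep p e0.2; move=> T0 h1 h2; lia.
have Ty e : e \in gE G -> ((ep p e.1 = k - 1 /\ ep p e.2 = k) \/ (ep p e.1 = k /\ ep p e.2 = k - 1) \/
   (ep p e.1 = k /\ ep p e.2 = k) \/ (ep p e.1 = k /\ ep p e.2 = k + 1) \/
   (ep p e.1 = k + 1 /\ ep p e.2 = k))%R.
  by move=> eE; apply: types; apply: Hk.
set mu := gmu G.
have vpos v : v \in gV G -> 0 < mu (ratr v).
  by move=> vV; apply: mu0; rewrite ltr0q; apply: Vp.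
have wpos w : w \in gW G -> 0 < mu (ratr w).
  by move=> wW; apply: mu0; rewrite ltr0q; apply: Wp.
have vnn v : v \in gV G -> 0 <= mu (ratr v) by move=> /vpos /ltW.
have wnn w : w \in gW G -> 0 <= mu (ratr w) by move=> /wpos /ltW.
have enn e : e \in gE G -> 0 <= mu (ratr e.1) * mu (ratr e.2).
  by move=> eE; have /andP[h1 h2] := Ep e eE; apply: mulr_ge0; [apply: vnn|apply: wnn].
have SV0 : 0 < muS mu (gV G) by apply: (@sum_pos _ _ _ _ e0.1) => //; apply: vpos.
have SW0 : 0 < muS mu (gW G) by apply: (@sum_pos _ _ _ _ e0.2) => //; apply: wpos.
have ET0 : 0 < muE mu (gE G).
  apply: (@sum_pos _ _ _ _ e0) => //; apply: mulr_gt0; [apply: vpos|apply: wpos] => //.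
pose VA := [fset v in gV G | (ep p v <= k)%R].
pose WA := [fset w in gW G | (ep p w <= k)%R].
pose EA := [fset e in gE G | (ep p e.1 <= k)%R && (ep p e.2 <= k)%R].
pose VB := [fset v in gV G | ep p v == (k + 1)%R].
pose WB := [fset w in gW G | ep p w == k].
pose EB := [fset e in gE G | ep p e.1 == (k + 1)%R].
pose VC := [fset v in gV G | ep p v == k].
pose WC := [fset w in gW G | ep p w == (k + 1)%R].
pose EC := [fset e in gE G | ep p e.2 == (k + 1)%R].
have hVAB : (muS mu VA + muS mu VB <= muS mu (gV G))%R.
  apply: (@sum_filter2 R _ (gV G) (fun v => (ep p v <= k)%R) (fun v => ep p v == (k + 1)%R) (fun v => mu (ratr v))) => //.
  move=> v _; apply/negP => /andP[h1 /eqP h2]; clear -h1 h2; lia.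
have hWAC : (muS mu WA + muS mu WC <= muS mu (gW G))%R.
  apply: (@sum_filter2 R _ (gW G) (fun v => (ep p v <= k)%R) (fun v => ep p v == (k + 1)%R) (fun v => mu (ratr v))) => //.
  move=> v _; apply/negP => /andP[h1 /eqP h2]; clear -h1 h2; lia.
have hWB : (muS mu WB <= muS mu (gW G))%R.
  exact: (@sum_filter R _ (gW G) (fun v => ep p v == k) (fun v => mu (ratr v))).
have hVC : (muS mu VC <= muS mu (gV G))%R.
  exact: (@sum_filter R _ (gV G) (fun v => ep p v == k) (fun v => mu (ratr v))).
have VA0 : (0 <= muS mu VA)%R by exact: (@sumf_ge0 R _ (gV G) _ (fun v => mu (ratr v))).
have WA0 : (0 <= muS mu WA)%R by exact: (@sumf_ge0 R _ (gW G) _ (fun v => mu (ratr v))).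
have VB0 : (0 <= muS mu VB)%R by exact: (@sumf_ge0 R _ (gV G) _ (fun v => mu (ratr v))).
have WB0 : (0 <= muS mu WB)%R by exact: (@sumf_ge0 R _ (gW G) _ (fun v => mu (ratr v))).
have VC0 : (0 <= muS mu VC)%R by exact: (@sumf_ge0 R _ (gV G) _ (fun v => mu (ratr v))).
have WC0 : (0 <= muS mu WC)%R by exact: (@sumf_ge0 R _ (gW G) _ (fun v => mu (ratr v))).
have EA0 : (0 <= muE mu EA)%R.
  exact: (@sumf_ge0 R _ (gE G) _ (fun e => mu (ratr e.1) * mu (ratr e.2))).
have EB0 : (0 <= muE mu EB)%R.
  exact: (@sumf_ge0 R _ (gE G) _ (fun e => mu (ratr e.1) * mu (ratr e.2))).
have EC0 : (0 <= muE mu EC)%R.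
  exact: (@sumf_ge0 R _ (gE G) _ (fun e => mu (ratr e.1) * mu (ratr e.2))).
have hE : muE mu (gE G) = (muE mu EA + muE mu EB + muE mu EC)%R.
  apply: (@sum_filter3 R _ (gE G) (fun e => (ep p e.1 <= k)%R && (ep p e.2 <= k)%R)
     (fun e => ep p e.1 == (k + 1)%R) (fun e => ep p e.2 == (k + 1)%R)
     (fun e => mu (ratr e.1) * mu (ratr e.2))).
  move=> e eE; have := Ty e eE.
  set a := ep p e.1; set b := ep p e.2; exact: part3.
set SV := muS mu (gV G) in SV0 hVAB hVC *.
set SW := muS mu (gW G) in SW0 hWAC hWB *.
set ET := muE mu (gE G) in ET0 hE *.
have pC : C6 tau M < p%:R by apply: hC.
have tau1' : tau < 1 by lra.
have pbig : (288 * 288 <= (p%:R : R))%R.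
  by apply: le_trans (ltW pC); apply: C6_big.
have [hq1 hq2] := @q_bound R tau p%:R tau0 tau1' pbig.
have p2 : (2 <= (p%:R : R))%R by rewrite ler_nat; apply: prime_gt1.
have p0 : (0 < (p%:R : R))%R by lra.
have ht : (0 <= (p%:R : R)^-1 <= 2^-1)%R.
  apply/andP; split; first by rewrite invr_ge0; lra.
  by rewrite lef_pV2 ?posrE //; lra.
have s13 : (3^-1 < (2 + tau)^-1)%R by rewrite ltf_pV2 ?posrE; lra.
have s12 : ((2 + tau)^-1 < 2^-1)%R by rewrite ltf_pV2 ?posrE; lra.
have hu := @unit01 R _ _ SV0 VB0 (le_trans (ler_wpDl VA0 (lexx _)) hVAB).
have hv := @unit01 R _ _ SW0 WC0 (le_trans (ler_wpDl WA0 (lexx _)) hWAC).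
have hrA := @ratioA R _ _ _ _ _ _ SV0 SW0 VA0 VB0 WA0 WC0 hVAB hWAC.
have hrB := @ratioB R _ _ _ _ SV0 SW0 VB0 WB0 hWB.
have hrC := @ratioC R _ _ _ _ SV0 SW0 WC0 VC0 hVC.
have xA0 : (0 <= muE mu EA / ET)%R by apply: divr_ge0 => //; apply: ltW.
have xB0 : (0 <= muE mu EB / ET)%R by apply: divr_ge0 => //; apply: ltW.
have xC0 : (0 <= muE mu EC / ET)%R by apply: divr_ge0 => //; apply: ltW.
have xs : (muE mu EA / ET + muE mu EB / ET + muE mu EC / ET = 1)%R.
  by rewrite -!mulrDl -hE mulfV // gt_eqF.
have Sel := @select R _ _ _ _ _ _ _ _ _ _ _ s13 s12 ht hq2 hq1 hu hv hrA hrB hrC xA0 xB0 xC0 xs.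
have q0 : (0 <= 1 - 1 / (p%:R : R) `^ (1 + tau / 4))%R by lra.
have k0 : (k <= 0)%R by clear -kneg; lia.
have k10 : (k + 1 <= 0)%R by clear -kneg; lia.
have Ep1 e : e \in gE G -> e.1 \in gV G by move=> /Ep /andP[].
have Ep2 e : e \in gE G -> e.2 \in gW G by move=> /Ep /andP[].
case: Sel => [[xA hxA]|[xB hxB]|[xC hxC]].
- have VAs : VA `<=` gV G by apply/fsubsetP => v; rewrite !inE => /andP[].
  have WAs : WA `<=` gW G by apply/fsubsetP => v; rewrite !inE => /andP[].
  have EAc : forall e, e \in EA -> [&& e \in gE G, e.1 \in VA & e.2 \in WA].
    move=> e; rewrite !inE => /andP[eE /andP[h1 h2]].
    by rewrite eE (Ep1 _ eE) (Ep2 _ eE) h1 h2.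
  have VAb : forall v, v \in VA -> (ep p v <= k)%R by move=> v; rewrite !inE => /andP[_ ->].
  have WAb : forall v, v \in WA -> (ep p v <= k)%R by move=> v; rewrite !inE => /andP[_ ->].
  have EAm : forall e, e \in EA -> (ep p e.1 == k) && (k <= k)%R || (ep p e.2 == k) && (k <= k)%R.
    move=> e; rewrite !inE => /andP[eE /andP[h1 h2]]; have := Ty e eE.
    move: h1 h2; set a := ep p e.1; set b := ep p e.2; clear; move=> h1 h2 T; lia.
  have cA0 : (0 <= (1 - (p%:R : R)^-1) ^+ 2 * (1 - 1 / (p%:R : R) `^ (1 + tau / 4)))%R.
    by apply: mulr_ge0 => //; apply: sqr_ge0.
  have fA : ((1 - (((k == k) && (k < 0)%R)%:R / p%:R)) ^+ 2 *
         (1 - 1 / powR (p%:R) (1 + tau / 4)) =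
       (1 - (p%:R : R)^-1) ^+ 2 * (1 - 1 / (p%:R : R) `^ (1 + tau / 4)) * p%:R ^+ `|(k - k)%R|%N)%R.
    have -> : (k < 0)%R = true by clear -kneg; lia.
    rewrite eqxx subrr /= expr0 mulr1; congr (_ ^+ 2 * _); by rewrite div1r.
  exact: (@opt R tau G p k k VA WA EA _ tau0 gG nt st hp k0 k0 VAs WAs EAc VAb WAb EAm
    SV0 SW0 ET0 cA0 xA hxA fA).
- have VBs : VB `<=` gV G by apply/fsubsetP => v; rewrite !inE => /andP[].
  have WBs : WB `<=` gW G by apply/fsubsetP => v; rewrite !inE => /andP[].
  have EBc : forall e, e \in EB -> [&& e \in gE G, e.1 \in VB & e.2 \in WB].
    move=> e; rewrite !inE => /andP[eE /eqP h1].
    rewrite eE (Ep1 _ eE) (Ep2 _ eE) h1 eqxx /=; apply/eqP.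
    have := Ty e eE; move: h1; set a := ep p e.1; set b := ep p e.2; clear; move=> h1 T; lia.
  have VBb : forall v, v \in VB -> (ep p v <= k + 1)%R.
    by move=> v; rewrite !inE => /andP[_ /eqP ->].
  have WBb : forall v, v \in WB -> (ep p v <= k)%R.
    by move=> v; rewrite !inE => /andP[_ /eqP ->].
  have EBm : forall e, e \in EB ->
      (ep p e.1 == (k + 1)%R) && (k <= k + 1)%R || (ep p e.2 == k) && (k + 1 <= k)%R.
    move=> e; rewrite !inE => /andP[eE ->] /=.
    by apply/orP; left; clear; lia.
  have cB0 : (0 <= (1 - 1 / (p%:R : R) `^ (1 + tau / 4)) / p%:R)%R.
    by apply: divr_ge0 => //; apply: ltW.
  have fB : ((1 - ((((k + 1)%R == k) && (k + 1 < 0)%R)%:R / p%:R)) ^+ 2 *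
         (1 - 1 / powR (p%:R) (1 + tau / 4)) =
       (1 - 1 / (p%:R : R) `^ (1 + tau / 4)) / p%:R * p%:R ^+ `|(k + 1 - k)%R|%N)%R.
    have -> : ((k + 1)%R == k) = false by clear; lia.
    have -> : `|(k + 1 - k)%R|%N = 1%N by clear; lia.
    rewrite /= mul0r subr0 expr1n mul1r expr1 mulfVK //; exact: lt0r_neq0.
  exact: (@opt R tau G p (k + 1)%R k VB WB EB _ tau0 gG nt st hp k10 k0 VBs WBs EBc VBb WBb EBm
    SV0 SW0 ET0 cB0 xB hxB fB).
- have VCs : VC `<=` gV G by apply/fsubsetP => v; rewrite !inE => /andP[].
  have WCs : WC `<=` gW G by apply/fsubsetP => v; rewrite !inE => /andP[].
  have ECc : forall e, e \in EC -> [&& e \in gE G, e.1 \in VC & e.2 \in WC].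
    move=> e; rewrite !inE => /andP[eE /eqP h1].
    rewrite eE (Ep1 _ eE) (Ep2 _ eE) h1 eqxx andbT /=; apply/eqP.
    have := Ty e eE; move: h1; set a := ep p e.1; set b := ep p e.2; clear; move=> h1 T; lia.
  have VCb : forall v, v \in VC -> (ep p v <= k)%R.
    by move=> v; rewrite !inE => /andP[_ /eqP ->].
  have WCb : forall v, v \in WC -> (ep p v <= k + 1)%R.
    by move=> v; rewrite !inE => /andP[_ /eqP ->].
  have ECm : forall e, e \in EC ->
      (ep p e.1 == k) && (k + 1 <= k)%R || (ep p e.2 == (k + 1)%R) && (k <= k + 1)%R.
    move=> e; rewrite !inE => /andP[eE ->] /=.
    by rewrite orbC /=; clear; lia.
  have cB0 : (0 <= (1 - 1 / (p%:R : R) `^ (1 + tau / 4)) / p%:R)%R.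
    by apply: divr_ge0 => //; apply: ltW.
  have fC : ((1 - (((k == (k + 1)%R) && (k < 0)%R)%:R / p%:R)) ^+ 2 *
         (1 - 1 / powR (p%:R) (1 + tau / 4)) =
       (1 - 1 / (p%:R : R) `^ (1 + tau / 4)) / p%:R * p%:R ^+ `|(k - (k + 1))%R|%N)%R.
    have -> : (k == (k + 1)%R) = false by clear; lia.
    have -> : `|(k - (k + 1))%R|%N = 1%N by clear; lia.
    rewrite /= mul0r subr0 expr1n mul1r expr1 mulfVK //; exact: lt0r_neq0.
  exact: (@opt R tau G p k (k + 1)%R VC WC EC _ tau0 gG nt st hp k0 k10 VCs WCs ECc VCb WCb ECm
    SV0 SW0 ET0 cB0 xC hxC fC).
Qed.
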